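(* Let $\alpha\in\mathbb{C}$ and let $S_n(x)\sim\left(\left(\frac{e^t-1}{t}\right)^{\alpha},\ \log(1+t)\right)$. Then for $n\ge1$, $$S_n(x)=\sum_{l=0}^{n-1}\binom{n-1}{l}N_l^{(-n)}\,B_{n-l}^{(\alpha)}(x).$$
   Context: For invertible $g(t)$ (nonzero constant term) and delta series $f(t)$ ($f(0)=0$, nonzero coefficient of $t$), the Sheffer sequence $S_n(x)\sim(g(t),f(t))$ is the unique polynomial sequence with $\sum_{k\ge0}S_k(y)\frac{t^k}{k!}=\frac{1}{g(\bar f(t))}e^{y\bar f(t)}$ for all $y\in\mathbb{C}$, where $\bar f$ is the compositional inverse of $f$. Complex powers of series with constant term $1$ are defined by $h^a=\exp(a\log h)$. The Narumi numbers are defined by $\left(\frac{\log(1+t)}{t}\right)^a=\sum_{l\ge0}N_l^{(a)}\frac{t^l}{l!}$. The Bernoulli polynomials of order $\alpha$ are defined by $\left(\frac{t}{e^t-1}\right)^{\alpha} e^{xt}=\sum_{n\ge0}B_n^{(\alpha)}(x)\frac{t^n}{n!}$. *)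

(* Defs.v *)
(* Formal power series over a field F are represented by
   their (ordinary) coefficient sequences  nat -> F ;  a n = [t^n] a(t).
   Equality of series is pointwise equality (=1). *)
From HB Require Import structures.
From mathcomp Require Import all_boot all_order all_algebra.
Set Implicit Arguments. Unset Strict Implicit. Unset Printing Implicit Defensive.
Import Order.TTheory GRing.Theory Num.Theory.
Local Open Scope ring_scope.

Definition fps (F : fieldType) := nat -> F.

Section FPS.
Variable F : fieldType.
Implicit Types a b g h : fps F.

Definition oneS : fps F := fun n => (n == 0)%:R.
Definition Xs : fps F := fun n => (n == 1)%:R.
Definition addS a b : fps F := fun n => a n + b n.
Definition scaleS (c : F) a : fps F := fun n => c * a n.
Definition mulS a b : fps F := fun n => \sum_(i < n.+1) a i * b (n - i)%N.
Fixpoint powN a (k : nat) : fps F :=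
  if k is k'.+1 then mulS a (powN a k') else oneS.
(* exp g = sum_k g^k / k!   (meaningful for g 0 = 0; only k <= n contribute) *)
Definition expS g : fps F :=
  fun n => \sum_(k < n.+1) powN g k n / (k`!)%:R.
(* log h = sum_{k>=1} (-1)^(k+1) (h-1)^k / k   (for h 0 = 1) *)
Definition logS h : fps F :=
  fun n => \sum_(1 <= k < n.+1) (-1) ^+ k.+1 / k%:R * powN (addS h (scaleS (-1) oneS)) k n.
(* complex (here: field-valued) power  h^a = exp(a log h) *)
Definition powC (a : F) h : fps F := expS (scaleS a (logS h)).
(* multiplicative inverse: h = h0 (1 - u), 1/h = h0^-1 sum_k u^k *)
Definition invS h : fps F :=
  let u := fun n => - (h n / h 0%N) + (n == 0)%:R in
  fun n => (h 0%N)^-1 * \sum_(k < n.+1) powN u k n.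
(* composition f(h(t)) for h 0 = 0 *)
Definition compS (f : fps F) h : fps F := fun n => \sum_(k < n.+1) f k * powN h k n.

(* Sheffer sequence S_n ~ (g(t), f(t)):  g invertible, f delta series,
   fbar the compositional inverse of f, and
   sum_k S_k(y) t^k/k! = (1 / g(fbar t)) e^{y fbar t} for all y. *)
Definition Sheffer g (f : fps F) (S : nat -> {poly F}) : Prop :=
  [/\ g 0%N != 0, f 0%N = 0, f 1%N != 0 &
   exists fbar : fps F,
     [/\ fbar 0%N = 0, compS f fbar =1 Xs &
      forall y : F,
        (fun k => (S k).[y] / (k`!)%:R)
          =1 mulS (invS (compS g fbar)) (expS (scaleS y fbar))]].

(* shift: a(t) / t  for a 0 = 0 *)
Definition divX a : fps F := fun n => a n.+1.

Definition expm1_div_t : fps F := divX (expS Xs).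
Definition log1p : fps F := logS (addS oneS Xs).

(* Narumi numbers: (log(1+t)/t)^a = sum_l N_l^(a) t^l / l! *)
Definition narumi (a : F) (l : nat) : F :=
  (l`!)%:R * powC a (divX log1p) l.

(* Bernoulli polynomials of order alpha, evaluated at x:
   (t/(e^t-1))^alpha e^{x t} = sum_n B_n^(alpha)(x) t^n/n! *)
Definition bernoulliA (alpha : F) (n : nat) (x : F) : F :=
  (n`!)%:R * mulS (powC alpha (invS expm1_div_t)) (expS (scaleS x Xs)) n.

End FPS.

(* Main.v *)
Require Import Defs.
From HB Require Import structures.
From mathcomp Require Import all_boot all_order all_algebra.
From mathcomp Require Import boolp.
From mathcomp Require Import ring.
From Stdlib Require Import FunctionalExtensionality.
Import Order.TTheory GRing.Theory Num.Theory.
Local Open Scope ring_scope.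
Set Implicit Arguments. Unset Strict Implicit. Unset Printing Implicit Defensive.

Section FpsRing.
Variable F : fieldType.

Definition rep (M : nat) (a : fps F) (p : {poly F}) := forall i, (i < M)%N -> a i = p`_i.
Definition tr (M : nat) (a : fps F) : {poly F} := \poly_(i < M) a i.
Lemma rep_tr M a : rep M a (tr M a).
Proof. by move=> i hi; rewrite coef_poly hi. Qed.

Lemma fps_ext (a b : fps F) : (forall M, exists p, rep M a p /\ rep M b p) -> a = b.
Proof.
move=> h; apply: functional_extensionality => i.
have [p [hp hq]] := h i.+1; by rewrite hp // hq.
Qed.

Lemma rep_mul M a b p q : rep M a p -> rep M b q -> rep M (mulS a b) (p * q).
Proof.
move=> ha hb i hi; rewrite /mulS coefM; apply: eq_bigr => j _.
rewrite ha ?hb //.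
  exact: leq_ltn_trans (leq_subr _ _) hi.
exact: leq_ltn_trans (leq_ord j) hi.
Qed.

Lemma rep_add M a b p q : rep M a p -> rep M b q -> rep M (addS a b) (p + q).
Proof. by move=> ha hb i hi; rewrite /addS coefD ha ?hb. Qed.

Lemma rep_one M : rep M (oneS F) 1.
Proof. by move=> i _; rewrite coef1. Qed.

Lemma rep_X M : rep M (Xs F) 'X.
Proof. by move=> i _; rewrite coefX. Qed.

Lemma rep_scale M c a p : rep M a p -> rep M (scaleS c a) (c *: p).
Proof. by move=> ha i hi; rewrite /scaleS coefZ ha. Qed.

Definition zeroS : fps F := fun _ => 0.
Definition oppS (a : fps F) : fps F := fun n => - a n.

HB.instance Definition _ := gen_eqMixin (fps F).
HB.instance Definition _ := gen_choiceMixin (fps F).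

Lemma addSA : associative (@addS F).
Proof. by move=> a b c; apply: functional_extensionality => i; rewrite /addS addrA. Qed.
Lemma addSC : commutative (@addS F).
Proof. by move=> a b; apply: functional_extensionality => i; rewrite /addS addrC. Qed.
Lemma add0S : left_id zeroS (@addS F).
Proof. by move=> a; apply: functional_extensionality => i; rewrite /addS /zeroS add0r. Qed.
Lemma addNS : left_inverse zeroS oppS (@addS F).
Proof. by move=> a; apply: functional_extensionality => i; rewrite /addS /zeroS /oppS addNr. Qed.

HB.instance Definition _ := GRing.isZmodule.Build (fps F) addSA addSC add0S addNS.

Lemma mulSA : associative (@mulS F).
Proof.
move=> a b c; apply: fps_ext => M; exists (tr M a * (tr M b * tr M c)); split.
  by apply: rep_mul; [apply: rep_tr| apply: rep_mul; apply: rep_tr].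
by rewrite mulrA; apply: rep_mul; [apply: rep_mul; apply: rep_tr| apply: rep_tr].
Qed.
Lemma mulSC : commutative (@mulS F).
Proof.
move=> a b; apply: fps_ext => M; exists (tr M a * tr M b); split.
  by apply: rep_mul; apply: rep_tr.
by rewrite mulrC; apply: rep_mul; apply: rep_tr.
Qed.
Lemma mul1S : left_id (oneS F) (@mulS F).
Proof.
move=> a; apply: fps_ext => M; exists (1 * tr M a); split.
  by apply: rep_mul; [apply: rep_one | apply: rep_tr].
by rewrite mul1r; apply: rep_tr.
Qed.
Lemma mulSDl : left_distributive (@mulS F) (@addS F).
Proof.
move=> a b c; apply: fps_ext => M; exists ((tr M a + tr M b) * tr M c); split.
  by apply: rep_mul; [apply: rep_add|]; apply: rep_tr.
by rewrite mulrDl; apply: rep_add; apply: rep_mul; apply: rep_tr.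
Qed.
Lemma oneS_neq0 : oneS F != (0 : fps F).
Proof.
apply/eqP => h; have := congr1 (fun f : fps F => f 0%N) h.
by rewrite /oneS /= => /eqP; rewrite oner_eq0.
Qed.

HB.instance Definition _ := GRing.Zmodule_isComNzRing.Build (fps F) mulSA mulSC mul1S mulSDl oneS_neq0.

Lemma mulSE (a b : fps F) : mulS a b = a * b. Proof. by []. Qed.
Lemma addSE (a b : fps F) : addS a b = a + b. Proof. by []. Qed.
Lemma oneSE : oneS F = 1. Proof. by []. Qed.




Hypothesis charF0 : [pchar F] =i pred0.
Implicit Types a b g h : fps F.

Lemma natf_neq0 n : (n.+1)%:R != 0 :> F.
Proof. by move/pcharf0P: charF0 => ->. Qed.
Lemma fact_neq0 n : (n`!)%:R != 0 :> F.
Proof. by move/pcharf0P: charF0 => ->; rewrite -lt0n fact_gt0. Qed.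

Lemma powNE a k : powN a k = a ^+ k.
Proof. by elim: k => //= k ->; rewrite exprS. Qed.

Lemma fps_addE a b i : (a + b) i = a i + b i. Proof. by []. Qed.
Lemma fps_oppE a i : (- a) i = - a i. Proof. by []. Qed.
Lemma fps_subE a b i : (a - b) i = a i - b i. Proof. by []. Qed.
Lemma fps_0E i : (0 : fps F) i = 0. Proof. by []. Qed.
Lemma fps_1E i : (1 : fps F) i = (i == 0%N)%:R. Proof. by []. Qed.
Lemma fps_mulE a b i : (a * b) i = \sum_(j < i.+1) a j * b (i - j)%N. Proof. by []. Qed.
Lemma fps_sumE (I : Type) (r : seq I) (P : pred I) (A : I -> fps F) i :
  (\sum_(k <- r | P k) A k) i = \sum_(k <- r | P k) A k i.
Proof. by apply: (big_rec2 (fun (y1 : fps F) y2 => y1 i = y2)) => // k y1 y2 _ <-. Qed.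
Lemma fps_natE n i : (n%:R : fps F) i = (i == 0%N)%:R *+ n.
Proof. elim: n => [|n IH]; first by rewrite !mulr0n. by rewrite !mulrS fps_addE IH. Qed.

Lemma rep_le M a p : rep M.+1 a p -> rep M a p.
Proof. by move=> h i hi; apply: h; apply: ltnW. Qed.

Lemma rep_pow M a p k : rep M a p -> rep M (a ^+ k) (p ^+ k).
Proof.
move=> h; elim: k => [|k IH]; first by rewrite !expr0; apply: rep_one.
by rewrite !exprS; apply: rep_mul.
Qed.
Lemma rep_mul' M a b p q : rep M a p -> rep M b q -> rep M (a * b) (p * q).
Proof. exact: rep_mul. Qed.
Lemma rep_add' M a b p q : rep M a p -> rep M b q -> rep M (a + b) (p + q).
Proof. exact: rep_add. Qed.
Lemma rep_opp M a p : rep M a p -> rep M (- a) (- p).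
Proof. by move=> h i hi; rewrite fps_oppE coefN h. Qed.
Lemma rep_sub M a b p q : rep M a p -> rep M b q -> rep M (a - b) (p - q).
Proof. by move=> ha hb; apply: rep_add'; [|apply: rep_opp]. Qed.
Lemma rep_one' M : rep M 1 1. Proof. exact: rep_one. Qed.

Definition cS (c : F) : fps F := scaleS c 1.
Lemma rep_cS M c : rep M (cS c) c%:P.
Proof. by move=> i _; rewrite /cS /scaleS coefC fps_1E; case: (i == 0%N); rewrite ?mulr1 ?mulr0. Qed.
Lemma scaleSE c a : scaleS c a = cS c * a.
Proof.
apply: fps_ext => M; exists (c%:P * tr M a); split.
  by rewrite mul_polyC; apply: rep_scale; apply: rep_tr.
by apply: rep_mul'; [apply: rep_cS | apply: rep_tr].
Qed.
Lemma cS_add c d : cS (c + d) = cS c + cS d.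
Proof. by apply: functional_extensionality => i; rewrite fps_addE /cS /scaleS mulrDl. Qed.
Lemma cS_mul c d : cS (c * d) = cS c * cS d.
Proof. by rewrite -scaleSE; apply: functional_extensionality => i; rewrite /cS /scaleS mulrA. Qed.
Lemma cS_opp c : cS (- c) = - cS c.
Proof. by apply: functional_extensionality => i; rewrite fps_oppE /cS /scaleS mulNr. Qed.
Lemma cS_nat n : cS n%:R = n%:R.
Proof. by apply: functional_extensionality => i; rewrite fps_natE /cS /scaleS fps_1E mulr_natl. Qed.
Lemma cS_one : cS 1 = 1.
Proof. by rewrite (cS_nat 1). Qed.
Lemma cS_E c i : cS c i = if i == 0%N then c else 0.
Proof. by rewrite /cS /scaleS fps_1E; case: (i == 0%N); rewrite ?mulr1 ?mulr0. Qed.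

Definition D a : fps F := fun n => a n.+1 * n.+1%:R.
Lemma rep_D M a p : rep M.+1 a p -> rep M (D a) p^`().
Proof. by move=> h i hi; rewrite /D coef_deriv h // mulr_natr. Qed.

Lemma fps_ext1 a b : (forall M, exists p, rep M.+1 a p /\ rep M.+1 b p) -> a = b.
Proof.
move=> h; apply: functional_extensionality => i.
have [p [hp hq]] := h i; by rewrite hp // hq.
Qed.

Lemma D_add a b : D (a + b) = D a + D b.
Proof. by apply: functional_extensionality => i; rewrite /D !fps_addE mulrDl. Qed.
Lemma D_opp a : D (- a) = - D a.
Proof. by apply: functional_extensionality => i; rewrite /D !fps_oppE mulNr. Qed.
Lemma D_sub a b : D (a - b) = D a - D b.
Proof. by rewrite D_add D_opp. Qed.
Lemma D_mul a b : D (a * b) = D a * b + a * D b.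
Proof.
apply: fps_ext => M; exists ((tr M.+1 a * tr M.+1 b)^`()); split.
  by apply: rep_D; apply: rep_mul'; apply: rep_tr.
rewrite derivM; apply: rep_add'; apply: rep_mul';
  by [apply: rep_D; apply: rep_tr | apply: rep_le; apply: rep_tr].
Qed.
Lemma D_cS c : D (cS c) = 0.
Proof. by apply: functional_extensionality => i; rewrite /D cS_E /= mul0r. Qed.
Lemma D_one : D 1 = 0.
Proof. by rewrite -cS_one D_cS. Qed.
Lemma D_X : D (Xs F) = 1.
Proof. by apply: functional_extensionality => i; rewrite /D /Xs fps_1E eqSS; case: i => [|i] /=; rewrite ?mul1r ?mul0r. Qed.
Lemma D_exp a n : D (a ^+ n) = n%:R * a ^+ n.-1 * D a.
Proof.
elim: n => [|n IH]; first by rewrite expr0 D_one mul0r mul0r.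
rewrite exprS D_mul IH; case: n {IH} => [|n] /=.
  rewrite !expr0 /=; ring.
rewrite exprS; ring.
Qed.

From mathcomp Require Import zify.

Lemma sum_widen (G : nat -> F) n m : (n <= m)%N -> (forall k, (n <= k)%N -> G k = 0) ->
  \sum_(k < n) G k = \sum_(k < m) G k.
Proof.
move=> le h; rewrite -(subnKC le) big_split_ord /= [X in _ + X]big1 ?addr0 // => k _.
by apply: h; rewrite leq_addr.
Qed.

Lemma coef_exp_low (Q : {poly F}) k i : Q`_0 = 0 -> (i < k)%N -> (Q ^+ k)`_i = 0.
Proof.
move=> Q0; elim: k i => [|k IH] i hi //.
rewrite exprS coefM big_ord_recl Q0 mul0r add0r big1 // => j _.
rewrite IH ?mulr0 //=; have := ltn_ord j; rewrite /bump leq0n add1n; lia.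
Qed.

Lemma rep_comp M f P h Q : rep M f P -> rep M h Q -> h 0%N = 0 -> rep M (compS f h) (P \Po Q).
Proof.
move=> hf hh h0 i hi.
have Q0 : Q`_0 = 0 by rewrite -hh ?h0 //; lia.
rewrite /compS coef_comp_poly.
transitivity (\sum_(k < i.+1) P`_k * (Q ^+ k)`_i).
  apply: eq_bigr => k _; rewrite hf; last by have := ltn_ord k; lia.
  by rewrite powNE (rep_pow k hh).
rewrite (@sum_widen (fun k => P`_k * (Q ^+ k)`_i) i.+1 (size P + i.+1)) ?leq_addl //; last first.
  by move=> k hk; rewrite coef_exp_low ?mulr0.
rewrite [RHS](@sum_widen (fun k => P`_k * (Q ^+ k)`_i) (size P) (size P + i.+1)) ?leq_addr //.
by move=> k hk; rewrite nth_default ?mul0r.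
Qed.

Lemma rep_exp M g G : rep M g G -> g 0%N = 0 ->
  rep M (expS g) (\sum_(k < M) (k`!%:R)^-1 *: G ^+ k).
Proof.
move=> hg g0 i hi.
have G0 : G`_0 = 0 by rewrite -hg ?g0 //; lia.
rewrite /expS coef_sum.
transitivity (\sum_(k < i.+1) (k`!%:R)^-1 * (G ^+ k)`_i).
  by apply: eq_bigr => k _; rewrite powNE (rep_pow k hg) // mulrC.
rewrite (@sum_widen (fun k => (k`!%:R)^-1 * (G ^+ k)`_i) i.+1 M) //; last first.
  by move=> k hk; rewrite coef_exp_low ?mulr0.
by apply: eq_bigr => k _; rewrite coefZ.
Qed.

Lemma rep_log M h P : rep M h P -> h 0%N = 1 ->
  rep M (logS h) (\sum_(k < M) ((-1) ^+ k.+1 / k%:R) *: (P - 1) ^+ k).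
Proof.
move=> hh h0 i hi.
have hu : rep M (addS h (scaleS (-1) (oneS F))) (P - 1).
  by apply: rep_add; [ | rewrite -scaleN1r; apply: rep_scale; apply: rep_one].
have U0 : (P - 1)`_0 = 0 by rewrite -hu; [rewrite /addS /scaleS h0 /oneS /=; ring | lia].
rewrite /logS coef_sum.
transitivity (\sum_(0 <= k < i.+1) (-1) ^+ k.+1 / k%:R * powN (addS h (scaleS (-1) (oneS F))) k i).
  by rewrite [in RHS]big_ltn // invr0 mulr0 mul0r add0r.
rewrite big_mkord.
transitivity (\sum_(k < i.+1) ((-1) ^+ k.+1 / k%:R) * ((P - 1) ^+ k)`_i).
  by apply: eq_bigr => k _; rewrite powNE (rep_pow k hu).
rewrite (@sum_widen (fun k => ((-1) ^+ k.+1 / k%:R) * ((P - 1) ^+ k)`_i) i.+1 M) //; last first.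
  by move=> k hk; rewrite coef_exp_low ?mulr0.
by apply: eq_bigr => k _; rewrite coefZ.
Qed.

Lemma rep_ext M a (p q : {poly F}) : rep M a p -> (forall i, (i < M)%N -> p`_i = q`_i) -> rep M a q.
Proof. by move=> h e i hi; rewrite h // e. Qed.

Lemma rep_inv M h P : rep M h P -> h 0%N != 0 ->
  rep M (invS h) ((h 0%N)^-1 *: \sum_(k < M) (1 - (h 0%N)^-1 *: P) ^+ k).
Proof.
move=> hh h0 i hi.
have hu : rep M (fun n => - (h n / h 0%N) + (n == 0%N)%:R) (1 - (h 0%N)^-1 *: P).
  by move=> j hj; rewrite coefB coefZ coef1 hh //; ring.
have U0 : (1 - (h 0%N)^-1 *: P)`_0 = 0.
  by rewrite -hu /= ?divff // ?addNr //; lia.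
rewrite /invS /= coefZ coef_sum; congr (_ * _).
transitivity (\sum_(k < i.+1) ((1 - (h 0%N)^-1 *: P) ^+ k)`_i).
  by apply: eq_bigr => k _; rewrite powNE (rep_pow k hu).
apply: (@sum_widen (fun k => ((1 - (h 0%N)^-1 *: P) ^+ k)`_i)) => // k hk; exact: coef_exp_low.
Qed.

Lemma mul_invS h : h 0%N != 0 -> h * invS h = 1.
Proof.
move=> h0; apply: (@fps_ext (h * invS h) 1) => M.
set U := 1 - (h 0%N)^-1 *: tr M h.
exists (1 - U ^+ M); split; last first.
  apply: rep_ext; first exact: rep_one'.
  move=> i hi; rewrite coefB [X in _ = _ - X]coef_exp_low ?subr0 //.
  rewrite /U coefB coefZ coef1 coef_poly /=.
  have -> : (0 < M)%N by lia.
  by rewrite mulVf // subrr.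
apply: rep_ext; first by apply: rep_mul'; [apply: rep_tr | apply: rep_inv => //; apply: rep_tr].
suff -> : tr M h * ((h 0%N)^-1 *: \sum_(k < M) (1 - (h 0%N)^-1 *: tr M h) ^+ k) = 1 - U ^+ M by [].
rewrite -/U.
have -> : tr M h = h 0%N *: (1 - U) by rewrite /U opprB addrC subrK scalerA divff // scale1r.
rewrite -scalerAl -scalerAr scalerA divff // scale1r.
have := subrX1 U M; rewrite -[in RHS]opprB mulNr => e.
by rewrite -[RHS]opprB e opprK.
Qed.

Lemma compS0 a h : compS a h 0%N = a 0%N.
Proof. by rewrite /compS big_ord1 /= /oneS /= mulr1. Qed.

Lemma rep_tr0 M h : h 0%N = 0 -> rep M h (tr M h). Proof. by move=> _; apply: rep_tr. Qed.

Lemma compS_mul a b h : h 0%N = 0 -> compS (a * b) h = compS a h * compS b h.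
Proof.
move=> h0; apply: fps_ext => M; exists ((tr M a * tr M b) \Po tr M h); split.
  by apply: rep_comp => //; [apply: rep_mul'|]; apply: rep_tr.
by rewrite comp_polyM; apply: rep_mul'; apply: rep_comp => //; apply: rep_tr.
Qed.
Lemma compS_add a b h : h 0%N = 0 -> compS (a + b) h = compS a h + compS b h.
Proof.
move=> h0; apply: fps_ext => M; exists ((tr M a + tr M b) \Po tr M h); split.
  by apply: rep_comp => //; [apply: rep_add'|]; apply: rep_tr.
by rewrite comp_polyD; apply: rep_add'; apply: rep_comp => //; apply: rep_tr.
Qed.
Lemma compS_cS c h : h 0%N = 0 -> compS (cS c) h = cS c.
Proof.
move=> h0; apply: fps_ext => M; exists (c%:P \Po tr M h); split.
  by apply: rep_comp => //; [apply: rep_cS|apply: rep_tr].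
by rewrite comp_polyC; apply: rep_cS.
Qed.
Lemma compS_one h : h 0%N = 0 -> compS 1 h = 1.
Proof. by move=> h0; rewrite -cS_one compS_cS. Qed.
Lemma compS_X h : h 0%N = 0 -> compS (Xs F) h = h.
Proof.
move=> h0; apply: fps_ext => M; exists ('X \Po tr M h); split.
  by apply: rep_comp => //; [apply: rep_X|apply: rep_tr].
by rewrite comp_polyX; apply: rep_tr.
Qed.
Lemma Xs0 : Xs F 0%N = 0. Proof. by []. Qed.
Lemma compS_Xr a : compS a (Xs F) = a.
Proof.
apply: fps_ext => M; exists (tr M a \Po 'X); split.
  by apply: rep_comp => //; [apply: rep_tr|apply: rep_X].
by rewrite comp_polyXr; apply: rep_tr.
Qed.
Lemma compSA a h (k : fps F) : h 0%N = 0 -> k 0%N = 0 -> compS (compS a h) k = compS a (compS h k).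
Proof.
move=> h0 k0; apply: fps_ext => M; exists ((tr M a \Po tr M h) \Po tr M k); split.
  by apply: rep_comp => //; [apply: rep_comp => //; apply: rep_tr | apply: rep_tr].
rewrite -comp_polyA; refine (@rep_comp M a (tr M a) (compS h k) (tr M h \Po tr M k) _ _ _).
- exact: rep_tr. - by apply: rep_comp => //; apply: rep_tr. - by rewrite compS0.
Qed.
Lemma D_comp a h : h 0%N = 0 -> D (compS a h) = compS (D a) h * D h.
Proof.
move=> h0; apply: fps_ext => M; exists ((tr M.+1 a \Po tr M.+1 h)^`()); split.
  by apply: rep_D; apply: rep_comp => //; apply: rep_tr.
rewrite deriv_comp; apply: rep_mul'; last by apply: rep_D; apply: rep_tr.
apply: rep_comp => //; first by apply: rep_D; apply: rep_tr.
by apply: rep_le; apply: rep_tr.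
Qed.
Lemma compS_opp a h : h 0%N = 0 -> compS (- a) h = - compS a h.
Proof.
move=> h0; apply: (@addrI _ (compS a h)); rewrite -compS_add // !subrr.
by apply: functional_extensionality => i; rewrite /compS big1 // => j _; rewrite mul0r.
Qed.
Lemma compS_sub a b h : h 0%N = 0 -> compS (a - b) h = compS a h - compS b h.
Proof. by move=> h0; rewrite compS_add // compS_opp. Qed.
Lemma compS_exp a h k : h 0%N = 0 -> compS (a ^+ k) h = compS a h ^+ k.
Proof.
move=> h0; elim: k => [|k IH]; first by rewrite !expr0 compS_one.
by rewrite !exprS compS_mul // IH.
Qed.

Lemma coef_mul_low (p q : {poly F}) M i : (forall j, (j < M)%N -> q`_j = 0) -> (i < M)%N -> (p * q)`_i = 0.
Proof.
move=> hq hi; rewrite coefM big1 // => j _; rewrite hq ?mulr0 //.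
exact: leq_ltn_trans (leq_subr _ _) hi.
Qed.

Lemma D_expS g : g 0%N = 0 -> D (expS g) = D g * expS g.
Proof.
move=> g0; apply: fps_ext => M.
set G := tr M.+1 g.
exists (G^`() * \sum_(k < M) (k`!%:R)^-1 *: G ^+ k); split.
  apply: rep_ext; first by apply: rep_D; apply: rep_exp => //; apply: rep_tr.
  move=> i hi; congr (nth 0 _ i); congr polyseq.
  rewrite raddf_sum big_ord_recl /= expr0 derivZ derivC scaler0 add0r.
  rewrite mulr_sumr; apply: eq_bigr => k _.
  rewrite derivZ deriv_exp /= /bump /= add1n -/G add0n -mulrnAr scalerAr -scaler_nat scalerA.
  congr (_ * (_ *: _)).
  rewrite factS natrM invfM mulrAC mulVf ?mul1r //; exact: natf_neq0.
apply: rep_mul'; first by apply: rep_D; apply: rep_tr.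
by apply: rep_exp => //; apply: rep_le; apply: rep_tr.
Qed.

Lemma D_logS h : h 0%N = 1 -> h * D (logS h) = D h.
Proof.
move=> h0; apply: fps_ext => M.
set P := tr M.+1 h; set U := P - 1.
have U0 : U`_0 = 0 by rewrite /U coefB coef_poly /= h0 coef1 subrr.
exists (P^`() - P^`() * (- U) ^+ M); split; last first.
  apply: rep_ext; first by apply: rep_D; apply: rep_tr.
  move=> i hi; rewrite coefB [X in _ = _ - X](@coef_mul_low _ _ M) ?subr0 //.
  by move=> j hj; apply: coef_exp_low; rewrite // coefN U0 oppr0.
apply: rep_ext.
  by apply: rep_mul'; [apply: rep_le; apply: rep_tr | apply: rep_D; apply: rep_log => //; apply: rep_tr].
move=> i hi; congr (nth 0 _ i); congr polyseq.
rewrite raddf_sum big_ord_recl /= invr0 mulr0 scale0r deriv0 add0r -/P -/U.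
have -> : \sum_(j < M) (((-1) ^+ (bump 0 j).+1 / (bump 0 j)%:R) *: U ^+ bump 0 j)^`()
   = U^`() * \sum_(j < M) (- U) ^+ j.
  rewrite mulr_sumr; apply: eq_bigr => j _.
  rewrite derivZ deriv_exp /= /bump /= add1n add0n -mulrnAr scalerAr -scaler_nat scalerA.
  rewrite -[in RHS]scaleN1r exprZn; congr (_ * (_ *: _)).
  rewrite -mulrA mulVf ?mulr1; last exact: natf_neq0.
  by rewrite !exprS !mulN1r opprK.
have e := subrX1 (- U) M.
have -> : U^`() = P^`() by rewrite /U derivB derivC subr0.
have e2 : P * \sum_(j < M) (- U) ^+ j = 1 - (- U) ^+ M.
  have -> : P = - (- U - 1) by rewrite /U; ring.
  by rewrite mulNr -e opprB.
by rewrite mulrCA e2 mulrBr mulr1.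
Qed.

Lemma ode_uniq h (q d : fps F) : h 0%N != 0 -> d 0%N = 0 -> h * D d = q * d -> d = 0.
Proof.
move=> h0 d0 E.
suff H : forall i j, (j <= i)%N -> d j = 0.
  by apply: functional_extensionality => j; exact: H j (leqnn j).
elim=> [|i IH] j hj; first by move: hj; rewrite leqn0 => /eqP ->.
case: (ltnP j i.+1) => hji; first by apply: IH.
have -> : j = i.+1 by apply/eqP; rewrite eqn_leq hj.
have := congr1 (fun f : fps F => f i) E; rewrite /= !fps_mulE.
rewrite [RHS]big1; last by move=> k _; rewrite IH ?mulr0 // leq_subr.
rewrite big_ord_recl [X in _ + X]big1 ?addr0; last first.
  move=> k _; rewrite /D IH ?mul0r ?mulr0 //; rewrite /bump /=; have := ltn_ord k; rewrite /bump /=; lia.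
rewrite /D /= subn0 => /eqP; rewrite !mulf_eq0 (negbTE h0) (negbTE (natf_neq0 i)) orbF /=.
by move/eqP.
Qed.

Lemma ode_uniq2 h (q y z : fps F) : h 0%N != 0 -> y 0%N = z 0%N ->
  h * D y = q * y -> h * D z = q * z -> y = z.
Proof.
move=> h0 yz Ey Ez; apply/eqP; rewrite -subr_eq0; apply/eqP.
apply: (@ode_uniq h q) => //; first by rewrite fps_subE yz subrr.
by rewrite D_sub mulrBr Ey Ez mulrBr.
Qed.

Lemma logS0 h : logS h 0%N = 0.
Proof. by rewrite /logS big_geq. Qed.
Lemma expS0 g : expS g 0%N = 1.
Proof. by rewrite /expS big_ord1 /= /oneS /= divr1. Qed.
Lemma invS0 h : invS h 0%N = (h 0%N)^-1.
Proof. by rewrite /invS /= big_ord1 /= /oneS /= mulr1. Qed.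
Lemma powC0 (al : F) h : powC al h 0%N = 1.
Proof. exact: expS0. Qed.
Lemma mul0E a b : (a * b) 0%N = a 0%N * b 0%N.
Proof. by rewrite fps_mulE big_ord1. Qed.

Lemma D_powC (a : F) h : h 0%N = 1 -> h * D (powC a h) = cS a * D h * powC a h.
Proof.
move=> h0; rewrite /powC scaleSE D_expS; last by rewrite mul0E logS0 mulr0.
rewrite D_mul D_cS mul0r add0r -(D_logS h0); ring.
Qed.

Lemma powC_mul (a : F) (A B : fps F) : A 0%N = 1 -> B 0%N = 1 -> powC a A * powC a B = powC a (A * B).
Proof.
move=> A0 B0.
have AB0 : (A * B) 0%N = 1 by rewrite mul0E A0 B0 mulr1.
apply: (@ode_uniq2 (A * B) (cS a * D (A * B))).
- by rewrite AB0 oner_neq0.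
- by rewrite mul0E !powC0 mulr1.
- have EA := D_powC a A0; have EB := D_powC a B0.
  transitivity (B * powC a B * (A * D (powC a A)) + A * powC a A * (B * D (powC a B))).
    by rewrite D_mul; ring.
  by rewrite EA EB D_mul; ring.
- by rewrite D_powC.
Qed.

Lemma powC_one (a : F) : powC a 1 = 1.
Proof.
apply: (@ode_uniq2 1 0).
- by rewrite oner_neq0.
- by rewrite powC0.
- by rewrite D_powC // D_one; ring.
- by rewrite D_one; ring.
Qed.

Lemma coef_cS_mul c a i : (cS c * a) i = c * a i.
Proof.
rewrite fps_mulE big_ord_recl /= cS_E subn0 big1 ?addr0 // => k _.
by rewrite cS_E /= mul0r.
Qed.
Lemma coef_nat_mul (m : nat) a i : (m%:R * a) i = m%:R * a i.
Proof. by rewrite -cS_nat coef_cS_mul. Qed.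

Lemma coef_X_mul0 a : (Xs F * a) 0%N = 0.
Proof. by rewrite mul0E /Xs /= mul0r. Qed.
Lemma coef_X_mulS a i : (Xs F * a) i.+1 = a i.
Proof.
rewrite fps_mulE big_ord_recl /= /Xs /= mul0r add0r big_ord_recl /= mul1r subSS subn0.
by rewrite big1 ?addr0 // => k _; rewrite /Xs /= mul0r.
Qed.
Lemma coef_Xn_mul k a i : (Xs F ^+ k * a) i = if (i < k)%N then 0 else a (i - k)%N.
Proof.
elim: k a i => [|k IH] a i; first by rewrite expr0 mul1r subn0.
rewrite exprS -mulrA; case: i => [|i]; first by rewrite coef_X_mul0.
by rewrite coef_X_mulS IH ltnS subSS.
Qed.

Lemma low_mul (d b : fps F) n j : (forall i, (i < n)%N -> d i = 0) -> (j < n)%N -> (d * b) j = 0.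
Proof.
move=> hd hj; rewrite fps_mulE big1 // => k _; rewrite hd ?mul0r //.
by have := ltn_ord k; lia.
Qed.
Lemma low_comp (d f : fps F) n j : (forall i, (i < n)%N -> d i = 0) -> (j < n)%N -> compS d f j = 0.
Proof.
move=> hd hj; rewrite /compS big1 // => k _; rewrite hd ?mul0r //.
by have := ltn_ord k; lia.
Qed.

Lemma compS_sum (I : Type) (r : seq I) (P : pred I) (A : I -> fps F) h : h 0%N = 0 ->
  compS (\sum_(k <- r | P k) A k) h = \sum_(k <- r | P k) compS (A k) h.
Proof.
move=> h0; apply: (big_rec2 (fun (y1 y2 : fps F) => compS y1 h = y2)).
  by apply: functional_extensionality => i; rewrite /compS big1 // => k _; rewrite mul0r.
by move=> k y1 y2 _ <-; rewrite compS_add.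
Qed.

Lemma lagrange_key (psi rho : fps F) m : psi * rho = 1 ->
  (D (Xs F * psi) * rho ^+ m.+1) m = (m == 0%N)%:R.
Proof.
move=> E.
have E2 : D psi * rho = - (psi * D rho).
  by apply/eqP; rewrite -subr_eq0 opprK -D_mul E D_one.
have Df : D (Xs F * psi) = psi + Xs F * D psi by rewrite D_mul D_X mul1r.
rewrite Df; case: m => [|m].
  have -> : (psi + Xs F * D psi) * rho ^+ 1 = psi * rho + Xs F * (D psi * rho) by ring.
  by rewrite E fps_addE coef_X_mul0 addr0.
have -> : (psi + Xs F * D psi) * rho ^+ m.+2 = (psi * rho) * rho ^+ m.+1 + Xs F * ((D psi * rho) * rho ^+ m.+1).
  by rewrite !exprS; ring.
rewrite E2 E mul1r.
have -> : Xs F * (- (psi * D rho) * rho ^+ m.+1) = - (Xs F * ((psi * rho) * (D rho * rho ^+ m))).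
  by rewrite exprS; ring.
rewrite E mul1r fps_addE fps_oppE coef_X_mulS /=.
have := congr1 (fun f : fps F => f m) (D_exp rho m.+1).
rewrite /= {1}/D -mulrA coef_nat_mul [rho ^+ m * _]mulrC => h.
have -> : (D rho * rho ^+ m) m = (rho ^+ m.+1) m.+1.
  by apply: (mulfI (natf_neq0 m)); rewrite -h mulrC.
by rewrite subrr.
Qed.

Lemma lagrange (psi rho K : fps F) n : psi * rho = 1 ->
  K n = (compS K (Xs F * psi) * D (Xs F * psi) * rho ^+ n.+1) n.
Proof.
move=> E.
have f0 : (Xs F * psi) 0%N = 0 := coef_X_mul0 psi.
set f := Xs F * psi in f0 *.
set Y := D f * rho ^+ n.+1.
have term : forall k, (k <= n)%N -> (f ^+ k * Y) n = (k == n)%:R.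
  move=> k hk; have -> : n = (k + (n - k))%N by rewrite subnKC.
  set m := (n - k)%N.
  have -> : f ^+ k * Y = Xs F ^+ k * (D f * rho ^+ m.+1) * (psi * rho) ^+ k.
    rewrite /Y /f !exprMn (_ : n.+1 = (k + m.+1)%N) ?exprD; [ring | rewrite /m; lia].
  rewrite E expr1n mulr1 coef_Xn_mul ltnNge leq_addr /= addKn lagrange_key //.
  by rewrite -{1}(addn0 k) eqn_add2l eq_sym.
set Kt := \sum_(k < n.+1) cS (K k) * Xs F ^+ k.
have hKt : forall j, (j < n.+1)%N -> Kt j = K j.
  move=> j hj; rewrite /Kt fps_sumE (bigD1 (Ordinal hj)) //= coef_cS_mul.
  rewrite -[Xs F ^+ j]mulr1 coef_Xn_mul ltnn subnn /= mulr1 big1 ?addr0 // => k hk.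
  rewrite coef_cS_mul -[Xs F ^+ k]mulr1 coef_Xn_mul.
  case: ltnP => hjk; first by rewrite mulr0.
  rewrite fps_1E; have : (j - k)%N != 0%N.
    by move: hk; rewrite -val_eqE /= => hk; lia.
  by move/negbTE => ->; rewrite mulr0.
have low : forall j, (j < n.+1)%N -> (K - Kt) j = 0 by move=> j hj; rewrite fps_subE hKt // subrr.
have -> : compS K f = compS Kt f + compS (K - Kt) f by rewrite -compS_add // addrC subrK.
rewrite -mulrA -/Y mulrDl fps_addE (@low_mul (compS (K - Kt) f) Y n.+1) ?addr0 //; last first.
  by move=> i hi; apply: (@low_comp _ _ n.+1).
rewrite /Kt compS_sum // mulr_suml fps_sumE.
transitivity (\sum_(k < n.+1) K k * (k == n :> nat)%:R).
  by rewrite big_ord_recr /= eqxx mulr1 big1 ?add0r // => k _; rewrite (ltn_eqF (ltn_ord k)) mulr0.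
apply: eq_bigr => k _.
rewrite compS_mul // compS_cS // compS_exp // compS_X // -mulrA coef_cS_mul term //.
by rewrite -ltnS.
Qed.

Lemma exp0E a k : (a ^+ k) 0%N = (a 0%N) ^+ k.
Proof. by elim: k => [|k IH]; rewrite ?expr0 // !exprS mul0E IH. Qed.

Lemma expS_comp (y : F) w : w 0%N = 0 ->
  expS (cS y * w) = compS (expS (cS y * Xs F)) w.
Proof.
move=> w0.
have h1 : (cS y * w) 0%N = 0 by rewrite mul0E w0 mulr0.
have h2 : (cS y * Xs F) 0%N = 0 by rewrite mul0E Xs0 mulr0.
apply: (@ode_uniq2 1 (cS y * D w)).
- by rewrite oner_neq0.
- by rewrite compS0 !expS0.
- by rewrite D_expS // D_mul D_cS mul0r add0r mul1r.
- rewrite D_comp // D_expS // D_mul D_cS mul0r add0r D_X mulr1 compS_mul // compS_cS //.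
  by rewrite mul1r; ring.
Qed.

Lemma powC_inv (al : F) A : A 0%N = 1 -> powC al A * powC al (invS A) = 1.
Proof.
move=> A0; rewrite powC_mul // ?mul_invS ?powC_one // ?A0 ?oner_neq0 //.
by rewrite invS0 A0 invr1.
Qed.

Lemma inv_uniq (g a b : fps F) : g * a = 1 -> g * b = 1 -> a = b.
Proof.
move=> ha hb; rewrite -[a]mulr1 -hb mulrA [a * g]mulrC ha mul1r //.
Qed.
End FpsRing.

Unset Implicit Arguments.
Theorem mainTheorem6 (F : fieldType) (charF0 : [pchar F] =i pred0)
  (alpha : F) (S : nat -> {poly F})
  (hS : Sheffer (powC alpha (expm1_div_t F)) (log1p F) S)
  (n : nat) (hn : (1 <= n)%N) (x : F) :
  (S n).[x] = \sum_(l < n) ('C(n.-1, l))%:R * narumi (- (n%:R)) l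
                * bernoulliA alpha (n - l) x.
Proof.
case: hS => _ _ _ [w [w0 fw hgen]].
have fwE : compS (log1p F) w = Xs F by apply: functional_extensionality.
set f := log1p F in fwE hgen *.
set E1 := expm1_div_t F in hgen *.
set g := powC alpha E1 in hgen *.
have h10 : (1 + Xs F) 0%N = 1 by rewrite fps_addE Xs0 addr0.
have f0 : f 0%N = 0 by rewrite /f /log1p logS0.
have Df1 : (1 + Xs F) * D f = 1.
  by rewrite /f /log1p addSE oneSE D_logS // D_add D_one D_X add0r.
set psi := divX f.
have fX : f = Xs F * psi.
  apply: functional_extensionality => -[|i]; first by rewrite coef_X_mul0.
  by rewrite coef_X_mulS.
have psi0 : psi 0%N = 1.
  rewrite /psi /divX /f /log1p /logS big_nat1 powNE expr1.
  by rewrite /addS /scaleS /oneS /Xs /= expr2 mulrN1 opprK divr1 mulr0 !addr0 add0r mul1r.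
set rho := invS psi.
have Epr : psi * rho = 1 by apply: mul_invS; rewrite psi0 oner_neq0.
have rho0 : rho 0%N = 1 by rewrite /rho invS0 psi0 invr1.
have E10 : E1 0%N = 1.
  rewrite /E1 /expm1_div_t /divX /expS !big_ord_recr big_ord0 /= mulSE oneSE mulr1 fps_1E /=.
  by rewrite /Xs /= mul0r !add0r divr1.
have g0 : g 0%N = 1 by rewrite /g powC0.
have Dw : D w = 1 + w.
  have e1 := congr1 (@D F) fwE; rewrite D_comp // D_X in e1.
  have e2 := congr1 (fun a => compS a w) Df1; rewrite /= compS_mul // compS_add // compS_one // compS_X // in e2.
  transitivity (D w * ((1 + w) * compS (D f) w)); first by rewrite e2 mulr1.
  by rewrite mulrCA [D w * _]mulrC e1 mulr1.
have wf : compS w f = Xs F.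
  set z := compS w f.
  have Dz : D z = (1 + z) * D f by rewrite /z D_comp // Dw compS_add // compS_one.
  apply/eqP; rewrite -subr_eq0; apply/eqP.
  apply: (@ode_uniq _ charF0 (1 + Xs F) 1).
  - by rewrite h10 oner_neq0.
  - by rewrite fps_subE /z compS0 w0 Xs0 subrr.
  - rewrite D_sub Dz D_X mulrBr mulrCA Df1; ring.
set G := compS g w.
have G0 : G 0%N = 1 by rewrite /G compS0.
have invGf : compS (invS G) f = powC alpha (invS E1).
  apply: (@inv_uniq _ g).
    have G0' : G 0%N != 0 by rewrite G0 oner_neq0.
    have := congr1 (fun a => compS a f) (mul_invS G0').
    by rewrite /= compS_mul // compS_one // /G compSA // wf compS_Xr.
  exact: powC_inv.
set gam := mulS (invS (compS g w)) (expS (scaleS x w)).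
set beta := mulS (powC alpha (invS E1)) (expS (scaleS x (Xs F))).
have gamf : compS gam f = beta.
  rewrite /gam /beta mulSE compS_mul // -/G invGf !scaleSE expS_comp // compSA // wf compS_Xr //.
have Phi : rho ^+ n = powC (- n%:R) psi.
  apply: (@ode_uniq2 _ charF0 psi (cS (- n%:R) * D psi)).
  - by rewrite psi0 oner_neq0.
  - by rewrite exp0E rho0 expr1n powC0.
  - have E2 : psi * D rho = - (D psi * rho).
      by apply/eqP; rewrite -subr_eq0 opprK addrC -D_mul Epr D_one.
    rewrite D_exp; case: n hn => // n' _ /=.
    transitivity (n'.+1%:R * rho ^+ n' * (psi * D rho)); first by ring.
    by rewrite E2 cS_opp cS_nat exprS; ring.
  - by rewrite D_powC.
case: n hn Phi => // n' _ Phi.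
have L := lagrange charF0 (D gam) n' Epr.
rewrite -fX -D_comp // gamf Phi in L.
have := hgen x n'.+1.
rewrite -/gam => hx.
have -> : (S n'.+1).[x] = (n'.+1)`!%:R * gam n'.+1.
  by rewrite -hx mulrC divfK // fact_neq0.
rewrite factS natrM; transitivity (n'`!%:R * (gam n'.+1 * n'.+1%:R)); first by ring.
have -> : gam n'.+1 * n'.+1%:R = D gam n' by [].
rewrite L [D beta * _]mulrC fps_mulE mulr_sumr; apply: eq_bigr => l _.
rewrite /narumi /bernoulliA -/f -/psi -/E1 -/beta /D.
have hl : (l <= n')%N by rewrite -ltnS.
have -> : (n'.+1 - l)%N = (n' - l).+1 by rewrite subSn.
rewrite factS.
have bf := bin_fact hl.
have e : ('C(n', l) * l`! * ((n' - l).+1 * (n' - l)`!))%N = (n'`! * (n' - l).+1)%N.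
  by rewrite -bf; ring.
have e' := congr1 (fun m : nat => m%:R : F) e; rewrite /= !natrM in e'.
transitivity ((n'`!%:R * (n' - l).+1%:R) * (powC (- n'.+1%:R) psi l * beta (n' - l).+1)); first by ring.
by rewrite -e'; ring.
Qed.
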